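(* Let $h\ge1$ and $n$ be positive integers, and let $\phi:\mathbb{R}^n\to\mathbb{R}$ be a $(Q,R)$-bounded function whose Taylor series at $0$ has radius of convergence at least $\nu>0$. Let $L=(L^{(1)},\dots,L^{(T)})$ be a sequence of vectors in $\mathbb{R}^n$ with $\|L^{(t)}\|_\infty\le\nu$ for all $t\in[T]$. Suppose that for some $\alpha\in(0,1)$, $B_1\ge2e^2R$ and $B_0\ge3$, for each $0\le h'\le h$ and each $t\in[T-h']$ we have $\|(D_{h'}L)^{(t)}\|_\infty\le\frac1{B_1}\alpha^{h'}(h')^{B_0h'}$ (with $0^0:=1$). Then for all $t\in[T-h]$, $$\big|(D_h(\phi\circ L))^{(t)}\big|\le\frac{12RQe^2}{B_1}\cdot\alpha^h\cdot h^{B_0h+1},$$ where $\phi\circ L$ is the scalar sequence $(\phi(L^{(1)}),\dots,\phi(L^{(T)}))$.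
   Context: Finite differences: $(D_0L)^{(t)}=L^{(t)}$ and $(D_hL)^{(t)}=(D_{h-1}L)^{(t+1)}-(D_{h-1}L)^{(t)}$ for $1\le t\le T-h$. A function $\phi:\mathbb{R}^n\to\mathbb{R}$, real-analytic near the origin with Taylor series $\sum_{\gamma\in\mathbb{Z}_{\ge0}^n}a_\gamma z^\gamma$ at $0$ (with $z^\gamma=z_1^{\gamma_1}\cdots z_n^{\gamma_n}$, $|\gamma|=\gamma_1+\dots+\gamma_n$), is called $(Q,R)$-bounded if $\sum_{|\gamma|=k}|a_\gamma|\le Q R^k$ for every integer $k\ge0$. *)

(* Defs.v *)
From HB Require Import structures.
From mathcomp Require Import all_boot all_order all_algebra.
From mathcomp Require Import all_classical all_reals all_analysis.
Set Implicit Arguments. Unset Strict Implicit. Unset Printing Implicit Defensive.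
Import Order.TTheory GRing.Theory Num.Theory.
Import numFieldNormedType.Exports.
Local Open Scope classical_set_scope.
Local Open Scope ring_scope.

Definition supnorm {R : realType} {n : nat} (v : 'I_n -> R) : R :=
  \big[Num.max/0]_(i < n) `|v i|.

Definition monom {R : realType} {n : nat} (gam : 'I_n -> nat) (z : 'I_n -> R) : R :=
  \prod_(i < n) z i ^+ gam i.

(* the homogeneous part of degree k of sum_gamma a_gamma z^gamma:
   sum over multi-indices gamma with |gamma| = k (each gamma_i <= k) *)
Definition homog_part {R : realType} {n : nat} (a : ('I_n -> nat) -> R)
    (z : 'I_n -> R) (k : nat) : R :=
  \sum_(g : {ffun 'I_n -> 'I_k.+1} | (\sum_(i < n) (g i : nat))%N == k)
     a (fun i => (g i : nat)) * monom (fun i => (g i : nat)) z.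

Definition coef_abs_sum {R : realType} {n : nat} (a : ('I_n -> nat) -> R)
    (k : nat) : R :=
  \sum_(g : {ffun 'I_n -> 'I_k.+1} | (\sum_(i < n) (g i : nat))%N == k)
     `|a (fun i => (g i : nat))|.

Definition QR_bounded {R : realType} {n : nat} (a : ('I_n -> nat) -> R)
    (Q Rb : R) : Prop :=
  forall k : nat, coef_abs_sum a k <= Q * Rb ^+ k.

(* phi is given by the power series sum_gamma a_gamma z^gamma (summed by
   total degree) at every z with ||z||_inf <= nu *)
Definition taylor_repr_on {R : realType} {n : nat} (phi : ('I_n -> R) -> R)
    (a : ('I_n -> nat) -> R) (nu : R) : Prop :=
  forall z : 'I_n -> R, supnorm z <= nu ->
    series (homog_part a z) @ \oo --> phi z.

Fixpoint fdiff {R : realType} (u : nat -> R) (h t : nat) : R :=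
  match h with
  | 0 => u t
  | h'.+1 => fdiff u h' t.+1 - fdiff u h' t
  end.

Definition vfdiff {R : realType} {n : nat} (L : nat -> 'I_n -> R) (h t : nat)
    : 'I_n -> R :=
  fun i => fdiff (fun s => L s i) h t.

(* Main.v *)
Require Import Defs.
From HB Require Import structures.
From mathcomp Require Import all_boot all_order all_algebra.
From mathcomp Require Import all_classical all_reals all_analysis.
From mathcomp Require Import zify ring lra.
Import Order.TTheory GRing.Theory Num.Theory.
Import numFieldNormedType.Exports.
Local Open Scope classical_set_scope.
Local Open Scope ring_scope.

Section FD.
Context {R : realType}.
Implicit Types (u v : nat -> R).

Lemma fdiff_ext u v h t : (forall s, (t <= s <= t + h)%N -> u s = v s) ->
  fdiff u h t = fdiff v h t.
Proof.
elim: h t => [|h IH] t H /=; first by apply: H; rewrite addn0 leqnn.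
rewrite (IH t.+1) ?(IH t) // => s /andP[h1 h2]; apply: H; apply/andP; split; lia.
Qed.

Lemma fdiff_sum (I : Type) (r : seq I) (P : pred I) (F : I -> nat -> R) h t :
  fdiff (fun s => \sum_(i <- r | P i) F i s) h t =
  \sum_(i <- r | P i) fdiff (F i) h t.
Proof.
elim: h t => [|h IH] t //=; by rewrite !IH sumrB.
Qed.

Lemma fdiffZ c u h t : fdiff (fun s => c * u s) h t = c * fdiff u h t.
Proof. elim: h t => [|h IH] t //=; by rewrite !IH mulrBr. Qed.

Lemma fdiff_const (c : R) h t : (0 < h)%N -> fdiff (fun _ => c) h t = 0.
Proof.
case: h => // h _; elim: h t => [|h IH] t; first by rewrite /= subrr.
have -> : fdiff (fun=> c) h.+2 t = fdiff (fun=> c) h.+1 t.+1 - fdiff (fun=> c) h.+1 t by [].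
by rewrite !IH subrr.
Qed.

Lemma fdiff_cvg (U : nat -> nat -> R) u h t :
  (forall s, (t <= s <= t + h)%N -> U ^~ s @ \oo --> u s) ->
  (fun N => fdiff (U N) h t) @ \oo --> fdiff u h t.
Proof.
elim: h t => [|h IH] t H /=; first by apply: H; rewrite addn0 leqnn.
apply: cvgB; apply: IH => s /andP[h1 h2]; apply: H; apply/andP; split; lia.
Qed.

Lemma leibniz u v m t :
  fdiff (fun s => u s * v s) m t =
  \sum_(i < m.+1) 'C(m, i)%:R * (fdiff u i t * fdiff v (m - i) (t + i)).
Proof.
elim: m t => [|m IH] t.
  by rewrite big_ord1 /= bin0 mul1r addn0.
rewrite /= !IH.
pose F i := fdiff u i t * fdiff v (m.+1 - i) (t + i).
have -> : \sum_(i < m.+1) 'C(m, i)%:R * (fdiff u i t.+1 * fdiff v (m - i) (t.+1 + i))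
    - \sum_(i < m.+1) 'C(m, i)%:R * (fdiff u i t * fdiff v (m - i) (t + i))
  = \sum_(i < m.+1) 'C(m, i)%:R * F i.+1 + \sum_(i < m.+1) 'C(m, i)%:R * F i.
  rewrite -sumrB -big_split; apply: eq_bigr => i _ /=.
  have Hi : (i <= m)%N := ltn_ord i.
  rewrite /F subSS (subSn Hi) /= addSn addnS.
  set a := fdiff u i t.+1; set b := fdiff u i t.
  rewrite -/a -/b. ring.
rewrite (eq_bigr (fun i : 'I_m.+2 => 'C(m.+1,i)%:R * F i)) //.
have E : forall i : 'I_m.+1, 'C(m.+1, lift ord0 i)%:R * F (lift ord0 i)
   = 'C(m, i)%:R * F i.+1 + 'C(m, i.+1)%:R * F i.+1.
  by move=> i; rewrite /= /bump leq0n add1n binS natrD mulrDl addrC.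
rewrite [RHS]big_ord_recl (eq_bigr _ (fun i _ => E i)) big_split /=.
rewrite [X in _ = _ + (_ + X)]big_ord_recr /= (bin_small (ltnSn m)) bin0.
rewrite [X in _ + X = _]big_ord_recl /= !bin0.
rewrite (eq_bigr (fun i : 'I_m => 'C(m, i.+1)%:R * F i.+1)); last first.
  by move=> i _; rewrite /bump leq0n add1n.
rewrite mulr0n mul0r !mul1r addr0; ring.
Qed.
End FD.


Lemma binom_term m i : (i <= m)%N -> ('C(m,i) * ((m-i)^(m-i) * i^i) <= m^m)%N.
Proof.
move=> Hi; have Hi' : (i < m.+1)%N by rewrite ltnS.
have -> : (m^m = (m - i + i)^m)%N by rewrite subnK.
by rewrite expnDn (bigD1 (Ordinal Hi')) //= leq_addr.
Qed.

Lemma bin_ge m i : (0 < i < m)%N -> (m <= 'C(m,i))%N.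
Proof.
elim: m i => [|m IH] i Hi; first lia.
case: i Hi => [|i] Hi; first lia.
rewrite binS; case: i Hi => [|i] Hi; first by rewrite bin1 bin0 addn1.
have H1 : (m <= 'C(m, i.+1))%N by apply: IH; rewrite /=; lia.
have H2 : (0 < 'C(m, i.+2))%N by rewrite bin_gt0; lia.
lia.
Qed.

Section W.
Context {R : realType}.

Definition w (p : R) (j : nat) : R := powR (j%:R) (p * j%:R).

Lemma w_pow p j : w p j = powR ((j ^ j)%:R) p.
Proof.
rewrite /w; case: j => [|j]; first by rewrite mulr0 powRr0 expn0 powR1.
by rewrite mulrC powRrM powR_mulrn // natrX.
Qed.

Lemma w_ge0 p j : 0 <= w p j.
Proof. exact: powR_ge0. Qed.

Lemma w0 p : w p 0 = 1.
Proof. by rewrite w_pow expn0 powR1. Qed.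

Lemma key_ineq (p : R) (b x y mm : nat) : (b * x <= y)%N -> (mm <= b)%N ->
  (0 < mm)%N -> (0 < x)%N -> 2 <= p ->
  b%:R * powR x%:R p <= powR y%:R p / mm%:R.
Proof.
move=> Hbxy Hmb Hm Hx Hp.
have mpos : 0 < (mm%:R : R) by rewrite ltr0n.
rewrite ler_pdivlMr //.
have p0 : 0 <= p by apply: le_trans Hp; lra.
have E1 : powR (b * x)%:R p <= powR y%:R p.
  by apply: ge0_ler_powR => //; rewrite ?nnegrE ?ler_nat.
apply: le_trans E1; rewrite natrM powRM //.
have b1 : 1 <= (b%:R : R) by rewrite ler1n; lia.
have E2 : (b%:R : R) ^+ 2 <= powR b%:R p.
  by rewrite -powR_mulrn ?ler_powR //; apply: le_trans b1.
have E3 : (b%:R : R) * mm%:R <= (b%:R) ^+ 2.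
  by rewrite expr2 ler_wpM2l ?ler_nat //; apply: le_trans b1.
have xp0 : 0 <= powR (x%:R : R) p by apply: powR_ge0.
rewrite mulrAC; apply: ler_wpM2r => //; exact: le_trans E3 E2.
Qed.

Lemma S_le (p : R) (hp : 2 <= p) m :
  \sum_(i < m.+1) 'C(m,i)%:R * (w p i * w p (m - i)) <= 3 * w p m.
Proof.
case: m => [|m]; first by rewrite big_ord1 /= w0 !mul1r; lra.
rewrite big_ord_recl big_ord_recr /= !bin0 binn subn0 subnn w0 !mul1r mulr1.
have Hmid : \sum_(i < m) 'C(m.+1, bump 0 i)%:R * (w p (bump 0 i) * w p (m.+1 - bump 0 i))
   <= \sum_(i < m) (w p m.+1 / m.+1%:R).
  apply: ler_sum => i _; rewrite /bump leq0n add1n.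
  have Hi : (i < m)%N := ltn_ord i.
  rewrite !w_pow -powRM ?ler0n // -natrM mulnC.
  apply: key_ineq => //; first by apply: binom_term; lia.
  - by apply: bin_ge; lia.
  - by rewrite muln_gt0 !expn_gt0; lia.
rewrite sumr_const card_ord in Hmid.
have Hm : (m%:R : R) * (w p m.+1 / m.+1%:R) <= w p m.+1.
  rewrite mulrCA; apply: ler_piMr; first exact: w_ge0.
  by rewrite ler_pdivrMr ?ltr0n // mul1r ler_nat.
have -> : w p (bump 0 m) = w p m.+1 by rewrite /bump leq0n add1n.
rewrite mulr_natl in Hm; have := le_trans Hmid Hm; lra.
Qed.
End W.

Section B.
Variable R : realType.
Variables (T h : nat) (alpha p : R).
Hypothesis alpha0 : 0 <= alpha.
Hypothesis p2 : 2 <= p.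

Definition bnd (C : R) (u : nat -> R) := forall m t, (m <= h)%N -> (1 <= t <= T - m)%N ->
  `|fdiff u m t| <= C * alpha ^+ m * w p m.

Lemma bnd_eq C u v : (forall s, u s = v s) -> bnd C u -> bnd C v.
Proof.
move=> E H m t Hm Ht; rewrite -(@fdiff_ext _ u) ?H // => s _; exact: E.
Qed.

Lemma bnd_le C C' u : C <= C' -> bnd C u -> bnd C' u.
Proof.
move=> HC H m t Hm Ht; apply: le_trans (H m t Hm Ht) _.
by apply: ler_wpM2r; [exact: w_ge0 | apply: ler_wpM2r => //; exact: exprn_ge0].
Qed.

Lemma bnd_one : bnd 1 (fun _ => 1).
Proof.
move=> [|m] t Hm Ht; first by rewrite /= normr1 w0 !mulr1.
rewrite fdiff_const // normr0 mul1r mulr_ge0 ?w_ge0 ?exprn_ge0 //.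
Qed.

Lemma bnd_mul Cu Cv u v : 0 <= Cu -> 0 <= Cv -> bnd Cu u -> bnd Cv v ->
  bnd (3 * Cu * Cv) (fun s => u s * v s).
Proof.
move=> Cu0 Cv0 Hu Hv m t Hm Ht; rewrite leibniz.
apply: le_trans (ler_norm_sum _ _ _) _.
apply: (@le_trans _ _ (\sum_(i < m.+1) (Cu * Cv * alpha ^+ m) * ('C(m, i)%:R * (w p i * w p (m - i))))).
  apply: ler_sum => i _.
  have Hi : (i <= m)%N := ltn_ord i.
  rewrite normrM ger0_norm ?ler0n // normrM.
  have E : Cu * Cv * alpha ^+ m * ('C(m, i)%:R * (w p i * w p (m - i))) =
     'C(m, i)%:R * ((Cu * alpha ^+ i * w p i) * (Cv * alpha ^+ (m - i) * w p (m - i))).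
    rewrite -{1}(subnKC Hi) exprD; ring.
  rewrite E; apply: ler_wpM2l => //; apply: ler_pM => //.
  - apply: Hu; lia.
  - apply: Hv; lia.
rewrite -mulr_sumr.
have HS := @S_le _ p p2 m.
have K0 : 0 <= Cu * Cv * alpha ^+ m by rewrite !mulr_ge0 ?exprn_ge0.
apply: le_trans (ler_wpM2l K0 HS) _; rewrite le_eqVlt; apply/orP; left; apply/eqP; ring.
Qed.

Lemma bnd_pow eps f : 0 <= eps -> bnd eps f ->
  forall j, bnd (3 ^+ j * eps ^+ j.+1) (fun s => f s ^+ j.+1).
Proof.
move=> e0 Hf; elim=> [|j IH].
  by rewrite expr0 mul1r expr1; apply: bnd_eq Hf => s; rewrite expr1.
have C0 : 0 <= 3 ^+ j * eps ^+ j.+1 by rewrite mulr_ge0 ?exprn_ge0.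
have := bnd_mul _ _ _ _ e0 C0 Hf IH.
have -> : 3 ^+ j.+1 * eps ^+ j.+2 = 3 * eps * (3 ^+ j * eps ^+ j.+1) by rewrite !exprS; ring.
move=> H; apply: bnd_eq H => s; by rewrite [in RHS]exprS.
Qed.

Lemma bnd_prod (n : nat) (L : nat -> 'I_n -> R) eps (g : 'I_n -> nat) (r : seq 'I_n) :
  0 <= eps -> (forall i, bnd eps (fun s => L s i)) ->
  bnd ((3 * eps) ^+ (\sum_(i <- r) g i)%N) (fun s => \prod_(i <- r) L s i ^+ g i).
Proof.
move=> e0 HL; elim: r => [|x r IH].
  by rewrite big_nil expr0; apply: bnd_eq bnd_one => s; rewrite big_nil.
rewrite big_cons; case E: (g x) => [|j].
  by rewrite add0n; apply: bnd_eq IH => s; rewrite big_cons E expr0 mul1r.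
have C0 : 0 <= 3 ^+ j * eps ^+ j.+1 by rewrite mulr_ge0 ?exprn_ge0.
have C1 : 0 <= (3 * eps) ^+ (\sum_(i <- r) g i)%N by rewrite exprn_ge0 // mulr_ge0.
have := bnd_mul _ _ _ _ C0 C1 (bnd_pow _ _ e0 (HL x) j) IH.
have EE : 3 * (3 ^+ j * eps ^+ j.+1) * (3 * eps) ^+ (\sum_(i <- r) g i)%N
   = (3 * eps) ^+ (j.+1 + \sum_(i <- r) g i)%N.
 by rewrite exprD (exprS (3 * eps) j) (exprMn j 3 eps) (exprS eps j); ring.
rewrite EE.
by move=> H; apply: bnd_eq H => s; rewrite big_cons E.
Qed.
End B.

Section M.
Context {R : realType}.

Lemma supnorm_ge {n} (v : 'I_n -> R) i : `|v i| <= supnorm v.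
Proof. by rewrite /supnorm (bigD1 i) //= le_max lexx. Qed.

Lemma geo (q : R) : 0 <= q -> q <= 1/2 -> forall N, \sum_(k < N) q ^+ k <= 2.
Proof.
move=> q0 q1; elim=> [|N IH]; first by rewrite big_ord0; lra.
rewrite big_ord_recl expr0.
rewrite (eq_bigr (fun i : 'I_N => q * q ^+ i)); last by move=> i _; rewrite /= /bump leq0n add1n exprS.
rewrite -mulr_sumr.
have H1 : q * \sum_(i < N) q ^+ i <= q * 2 by apply: ler_wpM2l.
move: H1; set S := q * _; lra.
Qed.

Lemma homog0_const {n} (a : ('I_n -> nat) -> R) (z z' : 'I_n -> R) :
  homog_part a z 0 = homog_part a z' 0.
Proof.
rewrite /homog_part; apply: eq_bigr => g _; congr (_ * _).
rewrite /monom; apply: eq_bigr => i _.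
have -> : (g i : nat) = 0%N by case: (g i) => [[|k] Hk].
by rewrite !expr0.
Qed.
End M.

Lemma rng_aux t s h T : (1 <= t <= T - h)%N -> (t <= s <= t + h)%N -> (1 <= s <= T)%N.
Proof. lia. Qed.

Theorem lemma4p4 (R : realType) (h n T : nat) (hpos : (1 <= h)%N) (npos : (0 < n)%N)
  (phi : ('I_n -> R) -> R) (a : ('I_n -> nat) -> R) (Q Rb nu : R)
  (Hbounded : QR_bounded a Q Rb) (nu_pos : 0 < nu)
  (Htaylor : taylor_repr_on phi a nu)
  (L : nat -> 'I_n -> R)
  (HL : forall t : nat, (1 <= t <= T)%N -> supnorm (L t) <= nu)
  (alpha B1 B0 : R) (Halpha : 0 < alpha < 1)
  (HB1 : 2 * expR 1 ^+ 2 * Rb <= B1) (HB0 : 3 <= B0)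
  (HD : forall h' t : nat, (h' <= h)%N -> (1 <= t <= T - h')%N ->
     supnorm (vfdiff L h' t)
       <= B1^-1 * alpha ^+ h' * powR (h'%:R) (B0 * h'%:R)) :
  forall t : nat, (1 <= t <= T - h)%N ->
    `| fdiff (fun s => phi (L s)) h t |
      <= 12 * Rb * Q * expR 1 ^+ 2 / B1 * alpha ^+ h
         * powR (h%:R) (B0 * h%:R + 1).
Proof.
move=> t Ht.
pose eps := B1^-1.
have alpha0 : 0 <= alpha by case/andP: Halpha => /ltW.
have p2 : 2 <= B0 by lra.
have e0 : 0 <= eps.
  have := HD 0%N t (leq0n h) (_ : (1 <= t <= T - 0)%N).
  rewrite expr0 mulr1 mulr0 powRr0 mulr1 => H.
  apply: le_trans (H _); last by lia.
  exact: le_trans (normr_ge0 _) (supnorm_ge _ (Ordinal npos)).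
have HLg : forall i, bnd R T h alpha B0 eps (fun s => L s i).
  move=> i m t' Hm Ht'; apply: le_trans (supnorm_ge (vfdiff L m t') i) _.
  exact: HD.
pose K := alpha ^+ h * w B0 h.
have K0 : 0 <= K by rewrite /K mulr_ge0 ?exprn_ge0 ?w_ge0.
pose c k := coef_abs_sum a k.
have c0 : forall k, 0 <= c k by move=> k; rewrite /c /coef_abs_sum sumr_ge0.
have Hhom : forall k, `|fdiff (fun s => homog_part a (L s) k) h t| <= c k * (3 * eps) ^+ k * K.
  move=> k; rewrite /homog_part fdiff_sum.
  apply: le_trans (ler_norm_sum _ _ _) _.
  rewrite /c /coef_abs_sum -mulrA mulr_suml.
  apply: ler_sum => g Hg; rewrite fdiffZ normrM; apply: ler_wpM2l => //.
  have := @bnd_prod R T h alpha B0 alpha0 p2 n L eps (fun i => g i : nat) (index_enum 'I_n) e0 HLg.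
  rewrite (eqP Hg) => Hb.
  by have := Hb h t (leqnn h) Ht; rewrite /K mulrA.
have ler_eq : forall x y : R, x = y -> x <= y by move=> x y ->.
have HQ0 : 0 <= Q.
  have := Hbounded 0%N; rewrite expr0 mulr1 => H; exact: le_trans (c0 0%N) H.
have Hc1 : 0 <= Q * Rb.
  have := Hbounded 1%N; rewrite expr1 => H; exact: le_trans (c0 1%N) H.
set E := expR 1 ^+ 2.
have e2 : 4 <= E.
  have e2' : 2 <= expR (1:R) by have := expR_ge1Dx (1:R); lra.
  rewrite /E expr2; have := ler_pM (_ : 0 <= 2) (_ : 0 <= 2) e2' e2'; lra.
have HB1e : 2 * E * Rb * eps <= B1 * eps := ler_wpM2r e0 HB1.
have Bee : B1 * eps <= 1.
  rewrite /eps; case: (eqVneq B1 0) => [->|nz]; first by rewrite mul0r; lra.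
  by rewrite mulfV.
have Hsum : forall N, \sum_(k < N) c k.+1 * (3 * eps) ^+ k.+1 <= 6 * (Q * Rb) * eps.
  move=> N; case: (eqVneq Q 0) => [Q0|Qn0].
    rewrite big1 ?Q0 ?mul0r ?mulr0 ?mul0r // => k _.
    have ck : c k.+1 = 0.
      apply/eqP; rewrite eq_le c0 andbT; have := Hbounded k.+1; by rewrite Q0 mul0r.
    by rewrite ck mul0r.
  have Qpos : 0 < Q by rewrite lt_neqAle eq_sym Qn0 HQ0.
  have Rb0 : 0 <= Rb by rewrite -(pmulr_rge0 _ Qpos).
  pose q := Rb * (3 * eps).
  have q0 : 0 <= q by rewrite /q mulr_ge0 // mulr_ge0.
  have q1 : q <= 1/2.
    have Re0 : 0 <= Rb * eps by rewrite mulr_ge0.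
    have H4 : 4 * (Rb * eps) <= E * (Rb * eps) := ler_wpM2r Re0 e2.
    have -> : q = 3 * (Rb * eps) by rewrite /q; ring.
    have H2 : 2 * (E * (Rb * eps)) <= 1.
      have -> : 2 * (E * (Rb * eps)) = 2 * E * Rb * eps by ring.
      exact: le_trans HB1e Bee.
    move: H4 H2; set X := Rb * eps; set Y := E * X; lra.
  apply: (@le_trans _ _ (\sum_(k < N) (Q * Rb * (3 * eps)) * q ^+ k)).
    apply: ler_sum => k _.
    have -> : Q * Rb * (3 * eps) * q ^+ k = Q * Rb ^+ k.+1 * (3 * eps) ^+ k.+1.
      by rewrite /q exprMn !exprS; ring.
    by apply: ler_wpM2r; [rewrite exprn_ge0 // mulr_ge0 | exact: Hbounded].
  rewrite -mulr_sumr.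
  have Hq : 0 <= Q * Rb * (3 * eps) by rewrite mulr_ge0 // mulr_ge0.
  have G2 := ler_wpM2l Hq (geo _ q0 q1 N). apply: le_trans G2 _.
  by apply: ler_eq; ring.
have HS : forall N, `|fdiff (fun s => series (homog_part a (L s)) N) h t| <= 6 * (Q * Rb) * eps * K.
  move=> N; rewrite /series /= fdiff_sum big_mkord.
  case: N => [|N].
    by rewrite big_ord0 normr0 mulr_ge0 // mulr_ge0 // mulr_ge0.
  rewrite big_ord_recl.
  have -> : fdiff (fun s => homog_part a (L s) 0) h t = 0.
    rewrite (@fdiff_ext _ _ (fun _ => homog_part a (L 0%N) 0)) ?fdiff_const // => s _.
    exact: homog0_const.
  rewrite add0r; apply: le_trans (ler_norm_sum _ _ _) _.
  apply: (@le_trans _ _ (\sum_(k < N) c k.+1 * (3 * eps) ^+ k.+1 * K)).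
    by apply: ler_sum => k _; exact: Hhom.
  rewrite -mulr_suml; apply: ler_wpM2r => //; exact: Hsum.
have Hcv : (fun N => fdiff (fun s => series (homog_part a (L s)) N) h t) @ \oo
    --> fdiff (fun s => phi (L s)) h t.
  apply: (fdiff_cvg (fun N s => series (homog_part a (L s)) N)) => s Hs.
  have Hs' : (1 <= s <= T)%N by exact: rng_aux Ht Hs.
  exact: (Htaylor (L s) (HL s Hs')).
have Hfin : `|fdiff (fun s => phi (L s)) h t| <= 6 * (Q * Rb) * eps * K.
  apply: (cvgr_to_le (cvg_norm Hcv)); apply: nearW => N; exact: HS N.
apply: le_trans Hfin _.
have Hp : powR h%:R (B0 * h%:R + 1) = w B0 h * h%:R.
  rewrite powRD; last by rewrite pnatr_eq0 -lt0n hpos implybT.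
  by rewrite powRr1 ?ler0n.
rewrite Hp.
have -> : 12 * Rb * Q * E / B1 * alpha ^+ h * (w B0 h * h%:R) = (12 * E * h%:R) * (Q * Rb * eps * K).
  by rewrite /K /eps; ring.
have -> : 6 * (Q * Rb) * eps * K = 6 * (Q * Rb * eps * K) by ring.
have X0 : 0 <= Q * Rb * eps * K by rewrite mulr_ge0 // mulr_ge0.
apply: ler_wpM2r => //.
have h1 : 1 <= (h%:R : R) by rewrite ler1n.
have : 4 * 1 <= E * h%:R by apply: ler_pM.
lra.
Qed.
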